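(* Let $\{\mathcal S,\mathcal C,\mathcal R,\mathcal K(t)\}$ with $\mathcal S=\{S_1,\dots,S_N\}$ be a weakly reversible non-autonomous mass-action system with bounded kinetics whose network consists of a single linkage class. Then for each $x_0\in\mathbb R^N_{>0}$, the solution $\phi(t,x_0)$ satisfies $\limsup_{t\to\infty}|\phi(t,x_0)|<\infty$; that is, the system has bounded trajectories.
   Context: A chemical reaction network on species $S_1,\dots,S_N$ consists of a finite set $\mathcal C\subset\mathbb Z^N_{\ge0}$ of complexes and a finite set $\mathcal R$ of reactions $y\to y'$ with $y,y'\in\mathcal C$, $y\ne y'$, such that every species has positive coefficient in some complex and every complex appears in some reaction; reactions are enumerated $y_k\to y_k'$. The reaction diagram is the directed graph on $\mathcal C$ with an edge for each reaction; its connected components are the linkage classes; the network is weakly reversible if each linkage class is strongly connected. A non-autonomous mass-action system with bounded kinetics is such a network with functions $\kappa_k:[0,\infty)\to\mathbb R$ and $\eta>0$ such that $\eta<\kappa_k(t)<1/\eta$ for all $t\ge0$, $k$, and dynamics $\dot x(t)=\sum_k\kappa_k(t)x(t)^{y_k}(y_k'-y_k)$, where $x^{y}=\prod_ix_i^{y_i}$ ($0^0=1$). $\phi(t,x_0)$ denotes the solution with initial condition $x_0$. *)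

(* Defs.v *)
From Stdlib Require Import Reals List Relations Arith.
Import ListNotations.
Open Scope R_scope.

(* A complex is a list of N natural coefficients; coefficient of species i
   (0-based) is [coef y i]. *)
Definition coef (y : list nat) (i : nat) : nat := nth i y 0%nat.

(* A reaction network on N species: a duplicate-free list of complexes and a
   list of reactions, each reaction being a pair (a, b) of indices into the
   complex list, meaning y_a -> y_b. *)
Record network := mkNetwork {
  complexes : list (list nat);
  reactions : list (nat * nat)
}.

Definition is_network (N : nat) (G : network) : Prop :=
  NoDup (complexes G) /\
  (forall y, In y (complexes G) -> length y = N) /\
  (forall r, In r (reactions G) ->
     (fst r < length (complexes G))%nat /\ (snd r < length (complexes G))%nat
     /\ fst r <> snd r) /\
  (forall i, (i < N)%nat -> exists y, In y (complexes G) /\ (0 < coef y i)%nat) /\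
  (forall a, (a < length (complexes G))%nat ->
     exists r, In r (reactions G) /\ (fst r = a \/ snd r = a)).

Definition edge (G : network) (a b : nat) : Prop := In (a, b) (reactions G).

Definition reach (G : network) : nat -> nat -> Prop :=
  clos_refl_trans nat (edge G).

Definition linked (G : network) : nat -> nat -> Prop :=
  clos_refl_trans nat (fun a b => edge G a b \/ edge G b a).

Definition weakly_reversible (G : network) : Prop :=
  forall a b, (a < length (complexes G))%nat -> (b < length (complexes G))%nat ->
    linked G a b -> reach G a b.

Definition single_linkage_class (G : network) : Prop :=
  forall a b, (a < length (complexes G))%nat -> (b < length (complexes G))%nat ->
    linked G a b.

Definition bounded_kinetics (G : network) (kappa : nat -> R -> R) : Prop :=
  exists eta, 0 < eta /\
    forall k t, (k < length (reactions G))%nat -> 0 <= t ->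
      eta < kappa k t /\ kappa k t < / eta.

(* x^y = prod_i x_i^{y_i}  (pow x 0 = 1, so 0^0 = 1) *)
Definition monomial (N : nat) (y : list nat) (x : nat -> R) : R :=
  fold_right Rmult 1 (map (fun i => x i ^ coef y i) (seq 0 N)).

Definition cplx (G : network) (a : nat) : list nat := nth a (complexes G) [].

Definition mass_action_rhs (N : nat) (G : network) (kappa : nat -> R -> R)
    (t : R) (x : nat -> R) (i : nat) : R :=
  fold_right Rplus 0
    (map (fun k =>
       let r := nth k (reactions G) (0%nat, 0%nat) in
       kappa k t * monomial N (cplx G (fst r)) x *
         (INR (coef (cplx G (snd r)) i) - INR (coef (cplx G (fst r)) i)))
     (seq 0 (length (reactions G)))).

Definition is_solution (N : nat) (G : network) (kappa : nat -> R -> R)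
    (x0 : nat -> R) (phi : R -> nat -> R) : Prop :=
  (forall i, (i < N)%nat -> phi 0 i = x0 i) /\
  (forall t i, 0 <= t -> (i < N)%nat ->
     derivable_pt_lim (fun s => phi s i) t (mass_action_rhs N G kappa t (phi t) i)).

Definition vnorm (N : nat) (x : nat -> R) : R :=
  sqrt (fold_right Rplus 0 (map (fun i => x i ^ 2) (seq 0 N))).

(* Main.v *)
Require Import Defs.
From Stdlib Require Import Reals List Relations Arith Lra Lia Classical.
Import ListNotations.
Open Scope R_scope.

Fixpoint sumR (n:nat) (f:nat->R) : R :=
  match n with O => 0 | S m => sumR m f + f m end.
Fixpoint prodR (n:nat) (f:nat->R) : R :=
  match n with O => 1 | S m => prodR m f * f m end.

Lemma sumR_ext n f g : (forall i, (i<n)%nat -> f i = g i) -> sumR n f = sumR n g.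
Proof. induction n; simpl; intros H; auto. rewrite IHn by (intros; apply H; lia). rewrite H by lia; auto. Qed.
Lemma prodR_ext n f g : (forall i, (i<n)%nat -> f i = g i) -> prodR n f = prodR n g.
Proof. induction n; simpl; intros H; auto. rewrite IHn by (intros; apply H; lia). rewrite H by lia; auto. Qed.
Lemma sumR_le n f g : (forall i, (i<n)%nat -> f i <= g i) -> sumR n f <= sumR n g.
Proof. induction n; simpl; intros H. lra. apply Rplus_le_compat. apply IHn; intros; apply H; lia. apply H; lia. Qed.
Lemma sumR_plus n f g : sumR n (fun i => f i + g i) = sumR n f + sumR n g.
Proof. induction n; simpl. lra. rewrite IHn; lra. Qed.
Lemma sumR_minus n f g : sumR n (fun i => f i - g i) = sumR n f - sumR n g.
Proof. induction n; simpl. lra. rewrite IHn; lra. Qed.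
Lemma sumR_scal n c f : sumR n (fun i => c * f i) = c * sumR n f.
Proof. induction n; simpl. lra. rewrite IHn; lra. Qed.
Lemma sumR_scalr n c f : sumR n (fun i => f i * c) = sumR n f * c.
Proof. induction n; simpl. lra. rewrite IHn; lra. Qed.
Lemma sumR_zero n f : (forall i, (i<n)%nat -> f i = 0) -> sumR n f = 0.
Proof. intros H. rewrite (sumR_ext n f (fun _ => 0)) by auto. induction n; simpl; auto; rewrite IHn; auto; lra. Qed.
Lemma sumR_nonneg n f : (forall i, (i<n)%nat -> 0 <= f i) -> 0 <= sumR n f.
Proof. intros H. replace 0 with (sumR n (fun _ => 0)). apply sumR_le; auto. apply sumR_zero; auto. Qed.
Lemma sumR_swap n m (f : nat -> nat -> R) :
  sumR n (fun i => sumR m (fun j => f i j)) = sumR m (fun j => sumR n (fun i => f i j)).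
Proof. induction n; simpl. symmetry; apply sumR_zero; auto. rewrite IHn, <- sumR_plus. auto. Qed.
Lemma sumR_const n c : sumR n (fun _ => c) = INR n * c.
Proof. induction n. simpl; lra. rewrite S_INR. simpl. rewrite IHn; lra. Qed.
Lemma sumR_le_one n f c k0 : (k0 < n)%nat -> (forall i, (i<n)%nat -> f i <= c) -> 0 <= c ->
  sumR n f <= f k0 + INR n * c.
Proof.
  induction n; intros Hk H Hc. lia. rewrite S_INR. simpl sumR.
  destruct (Nat.eq_dec k0 n). subst.
  assert (sumR n f <= INR n * c).
  { replace (INR n * c) with (sumR n (fun _ => c)). apply sumR_le; intros; apply H; lia.
    apply sumR_const. }
  lra.
  assert (sumR n f <= f k0 + INR n * c) by (apply IHn; auto; try lia; intros; apply H; lia).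
  assert (f n <= c) by (apply H; lia). lra.
Qed.

Lemma fold_sum n f : fold_right Rplus 0 (map f (seq 0 n)) = sumR n f.
Proof. induction n. reflexivity. rewrite seq_S, map_app, fold_right_app. simpl.
 rewrite <- IHn. generalize (f n). clear. induction (map f (seq 0 n)); simpl; intros. lra. rewrite IHl; lra. Qed.
Lemma fold_prod n f : fold_right Rmult 1 (map f (seq 0 n)) = prodR n f.
Proof. induction n. reflexivity. rewrite seq_S, map_app, fold_right_app. simpl.
 rewrite <- IHn. generalize (f n). clear. induction (map f (seq 0 n)); simpl; intros. lra. rewrite IHl; lra. Qed.

Lemma sumR_deriv n (F : R -> nat -> R) F' t :
  (forall i, (i<n)%nat -> derivable_pt_lim (fun s => F s i) t (F' i)) ->
  derivable_pt_lim (fun s => sumR n (F s)) t (sumR n F').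
Proof.
  induction n; simpl; intros H.
  apply derivable_pt_lim_const.
  apply (derivable_pt_lim_plus (fun s => sumR n (F s)) (fun s => F s n)).
  apply IHn; intros; apply H; lia. apply H; lia.
Qed.
Lemma sumR_cont n (F : R -> nat -> R) t :
  (forall i, (i<n)%nat -> continuity_pt (fun s => F s i) t) ->
  continuity_pt (fun s => sumR n (F s)) t.
Proof.
  induction n; simpl; intros H.
  apply continuity_pt_const; intros ? ?; auto.
  apply (continuity_pt_plus (fun s => sumR n (F s)) (fun s => F s n)).
  apply IHn; intros; apply H; lia. apply H; lia.
Qed.
Lemma prodR_cont n (F : R -> nat -> R) t :
  (forall i, (i<n)%nat -> continuity_pt (fun s => F s i) t) ->
  continuity_pt (fun s => prodR n (F s)) t.
Proof.
  induction n; simpl; intros H.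
  apply continuity_pt_const; intros ? ?; auto.
  apply (continuity_pt_mult (fun s => prodR n (F s)) (fun s => F s n)).
  apply IHn; intros; apply H; lia. apply H; lia.
Qed.
Lemma prodR_nonneg n f : (forall i, (i<n)%nat -> 0 <= f i) -> 0 <= prodR n f.
Proof. induction n; simpl; intros H. lra. apply Rmult_le_pos. apply IHn; intros; apply H; lia. apply H; lia. Qed.
Lemma prodR_exp n f : prodR n (fun i => exp (f i)) = exp (sumR n f).
Proof. induction n; simpl. rewrite exp_0; auto. rewrite IHn, exp_plus; auto. Qed.

Lemma exp_le_inc x y : x <= y -> exp x <= exp y.
Proof. intros [H|H]. left; apply exp_increasing; auto. subst; lra. Qed.

Lemma exp_sq_bound z : 0 <= z -> z * z <= 4 * exp z.
Proof.
  intros Hz. assert (H := exp_ineq1_le (z/2)).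
  replace (exp z) with (exp (z/2) * exp (z/2)) by (rewrite <- exp_plus; f_equal; lra).
  nra.
Qed.

Definition hgap eta (nR:nat) th := 1 + INR nR * (th + 4) * exp th / (eta*eta).

Lemma tier_estimate (nR:nat) (a b : nat -> nat) (kap l : nat -> R) eta M th k0 :
  0 < eta -> 0 <= th ->
  (forall k, (k<nR)%nat -> eta < kap k < /eta) ->
  (forall k, (k<nR)%nat -> l (a k) <= M /\ l (b k) <= M) ->
  (forall k, (k<nR)%nat -> M - th <= l (a k) \/ l (a k) < M - th - hgap eta nR th) ->
  (k0 < nR)%nat -> M - th <= l (a k0) -> l (b k0) < M - th - hgap eta nR th ->
  sumR nR (fun k => kap k * exp (l (a k)) * (l (b k) - l (a k))) <= 0.
Proof.
  intros Heta Hth Hk Hle Hband Hk0 Ha0 Hb0.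
  set (h := hgap eta nR th).
  assert (HR0 : 0 <= INR nR) by apply pos_INR.
  assert (Hie : 0 < / eta) by (apply Rinv_0_lt_compat; auto).
  assert (Hh1 : 1 <= h).
  { unfold h, hgap. assert (0 <= INR nR * (th + 4) * exp th / (eta*eta)); [|lra].
    unfold Rdiv. apply Rmult_le_pos. apply Rmult_le_pos. apply Rmult_le_pos; lra.
    left; apply exp_pos. left; apply Rinv_0_lt_compat; nra. }
  set (c := exp M * (th / eta + 4 / (eta * h))).
  assert (HM : 0 < exp M) by apply exp_pos.
  assert (Hc0 : 0 <= c).
  { unfold c. apply Rmult_le_pos; [lra|]. unfold Rdiv.
    assert (0 < / (eta*h)) by (apply Rinv_0_lt_compat; nra).
    assert (0 <= th * / eta) by (apply Rmult_le_pos; lra). lra. }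
  assert (Hterm : forall k, (k<nR)%nat -> kap k * exp (l (a k)) * (l (b k) - l (a k)) <= c).
  { intros k Hkk. destruct (Hk k Hkk) as [Hk1 Hk2]. destruct (Hle k Hkk) as [Ha Hb].
    assert (Hea : 0 < exp (l (a k))) by apply exp_pos.
    destruct (Rle_dec (l (b k)) (l (a k))) as [Hba|Hba].
    { assert (kap k * exp (l (a k)) * (l (b k) - l (a k)) <= 0); [|lra].
      assert (0 < kap k * exp (l (a k))) by nra. nra. }
    assert (Hup : kap k * exp (l (a k)) * (l (b k) - l (a k)) <= / eta * exp (l (a k)) * (M - l (a k))).
    { assert (0 < exp (l (a k)) * (l (b k) - l (a k))) by nra.
      apply Rle_trans with (/eta * exp (l (a k)) * (l (b k) - l (a k))). 
      - rewrite !Rmult_assoc. apply Rmult_le_compat_r; lra.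
      - rewrite !Rmult_assoc. apply Rmult_le_compat_l; [lra|]. apply Rmult_le_compat_l; lra. }
    destruct (Hband k Hkk) as [Hin|Hout].
    - assert (exp (l (a k)) <= exp M) by (apply exp_le_inc; auto).
      assert (/ eta * exp (l (a k)) * (M - l (a k)) <= / eta * exp M * th).
      { rewrite !Rmult_assoc. apply Rmult_le_compat_l; [lra|].
        apply Rmult_le_compat; lra. }
      unfold c. assert (0 <= 4 / (eta*h)).
      { unfold Rdiv. assert (0 < / (eta*h)) by (apply Rinv_0_lt_compat; nra). lra. }
      unfold Rdiv in *. nra.
    - set (z := M - l (a k)).
      change (hgap eta nR th) with h in Hout.
      assert (Hz : h < z) by (unfold z; lra).
      assert (Hexpz : exp (l (a k)) * exp z = exp M) by (rewrite <- exp_plus; f_equal; unfold z; lra).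
      assert (Hq := exp_sq_bound z ltac:(lra)).
      assert (Hkey : exp (l (a k)) * z * h <= 4 * exp M).
      { rewrite <- Hexpz. assert (exp (l (a k)) * z * h <= exp (l (a k)) * (z*z)).
        { rewrite Rmult_assoc. apply Rmult_le_compat_l; [lra|]. apply Rmult_le_compat_l; lra. }
        nra. }
      assert (exp (l (a k)) * z <= 4 * exp M / h).
      { apply Rmult_le_reg_r with h; [lra|]. replace (4 * exp M / h * h) with (4 * exp M) by (field; lra). lra. }
      assert (/ eta * exp (l (a k)) * z <= c).
      { unfold c. rewrite Rmult_assoc. 
        assert (/eta * (exp (l (a k)) * z) <= /eta * (4 * exp M / h)) by (apply Rmult_le_compat_l; lra).
        assert (/eta * (4 * exp M / h) = exp M * (4 / (eta*h))) by (field; lra).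
        assert (0 <= exp M * (th/eta)). { apply Rmult_le_pos; [lra|]. unfold Rdiv; apply Rmult_le_pos; lra. }
        rewrite Rmult_plus_distr_l. lra. }
      fold z in Hup. lra. }
  assert (Hk0t : kap k0 * exp (l (a k0)) * (l (b k0) - l (a k0)) <= - (eta * exp M * exp (- th) * h)).
  { destruct (Hk k0 Hk0) as [Hk1 Hk2].
    assert (Hexp : exp M * exp (-th) <= exp (l (a k0))).
    { rewrite <- exp_plus. apply exp_le_inc. lra. }
    assert (Hpos : 0 < exp M * exp (-th)) by (apply Rmult_lt_0_compat; auto; apply exp_pos).
    assert (kap k0 * exp (l (a k0)) >= eta * (exp M * exp (-th))) by nra.
    assert (l (b k0) - l (a k0) <= - h) by (change (hgap eta nR th) with h in Hb0; lra).
    assert (0 < kap k0 * exp (l (a k0))) by (apply Rmult_lt_0_compat; [lra|apply exp_pos]).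
    nra. }
  apply Rle_trans with (kap k0 * exp (l (a k0)) * (l (b k0) - l (a k0)) + INR nR * c).
  { apply (sumR_le_one nR (fun k => kap k * exp (l (a k)) * (l (b k) - l (a k))) c k0); auto. }
  assert (Hexp1 : exp (-th) * exp th = 1) by (rewrite <- exp_plus, <- exp_0; f_equal; lra).
  assert (Hgoal : INR nR * (th / eta + 4 / (eta*h)) <= eta * exp (- th) * h).
  { assert (INR nR * (th / eta + 4 / (eta*h)) <= INR nR * (th + 4) / eta).
    { assert (th / eta + 4 / (eta*h) <= (th + 4) / eta).
      { assert (4 / (eta*h) <= 4 / eta).
        { unfold Rdiv. apply Rmult_le_compat_l; [lra|]. apply Rinv_le_contravar; nra. }
        replace ((th+4)/eta) with (th/eta + 4/eta) by (field; lra). lra. }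
      unfold Rdiv at 3. rewrite Rmult_assoc. apply Rmult_le_compat_l; auto. }
    assert (INR nR * (th + 4) / eta <= eta * exp (-th) * h).
    { unfold h, hgap. 
      assert (He : 0 < exp (-th)) by apply exp_pos.
      assert (eta * exp (- th) * (INR nR * (th + 4) * exp th / (eta * eta)) = INR nR * (th+4) / eta).
      { replace (eta * exp (- th) * (INR nR * (th + 4) * exp th / (eta * eta))) with
          ((exp (-th) * exp th) * (INR nR * (th + 4)) / eta) by (field; lra).
        rewrite Hexp1. field. lra. }
      rewrite Rmult_plus_distr_l. assert (0 < eta * exp (-th)) by nra. lra. }
    lra. }
  unfold c. 
  assert (exp M * (INR nR * (th / eta + 4 / (eta*h))) <= exp M * (eta * exp (- th) * h)) by (apply Rmult_le_compat_l; lra).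
  nra.
Qed.

Fixpoint theta eta (nR:nat) (j:nat) : R :=
  match j with O => 0 | S j' => theta eta nR j' + hgap eta nR (theta eta nR j') end.

Lemma hgap_pos eta nR th : 0 < eta -> 0 <= th -> 1 <= hgap eta nR th.
Proof. intros. unfold hgap. assert (0 <= INR nR * (th + 4) * exp th / (eta*eta)); [|lra].
    unfold Rdiv. apply Rmult_le_pos. apply Rmult_le_pos. apply Rmult_le_pos. apply pos_INR. lra.
    left; apply exp_pos. left; apply Rinv_0_lt_compat; nra. Qed.

Lemma theta_nonneg eta nR j : 0 < eta -> 0 <= theta eta nR j.
Proof. intros; induction j; simpl. lra. pose proof (hgap_pos eta nR (theta eta nR j)). lra. Qed.

Lemma theta_mono eta nR j j' : 0 < eta -> (j <= j')%nat -> theta eta nR j <= theta eta nR j'.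
Proof. intros He H. induction H. lra. simpl. pose proof (hgap_pos eta nR (theta eta nR m) He (theta_nonneg _ _ _ He)). lra. Qed.

Fixpoint maxl (l : nat -> R) (m : nat) : R :=
  match m with O => l O | S m' => Rmax (maxl l m') (l (S m')) end.
Lemma maxl_ge l m u : (u <= m)%nat -> l u <= maxl l m.
Proof. induction m; intros H; simpl. replace u with O by lia; lra.
  destruct (Nat.eq_dec u (S m)). subst. apply Rmax_r. eapply Rle_trans; [apply IHm; lia| apply Rmax_l]. Qed.
Lemma maxl_att l m : exists u, (u <= m)%nat /\ maxl l m = l u.
Proof. induction m; simpl. exists O; split; auto. destruct IHm as [u [Hu Hm]].
  unfold Rmax. destruct (Rle_dec (maxl l m) (l (S m))). exists (S m); split; auto. exists u; split; auto. Qed.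

Lemma crossing (E : nat -> nat -> Prop) (P : nat -> Prop) u v :
  clos_refl_trans nat E u v -> P u -> ~ P v -> exists c d, E c d /\ P c /\ ~ P d.
Proof.
  induction 1; intros Hx Hy. exists x, y; auto. contradiction.
  destruct (classic (P y)). apply IHclos_refl_trans2; auto. apply IHclos_refl_trans1; auto.
Qed.

Lemma filter_strict {A} (p q : A -> bool) (L : list A) :
  (forall x, In x L -> p x = true -> q x = true) ->
  (exists x, In x L /\ q x = true /\ p x = false) ->
  (S (length (filter p L)) <= length (filter q L))%nat.
Proof.
  induction L; simpl; intros H1 [x [Hx [Hq Hp]]]. contradiction.
  assert (Hmono : forall L', (forall x, In x L' -> p x = true -> q x = true) -> (length (filter p L') <= length (filter q L'))%nat).
  { clear. induction L'; simpl; intros H. lia. destruct (p a) eqn:E. rewrite (H a (or_introl eq_refl) E). simpl.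
    specialize (IHL' (fun x Hx => H x (or_intror Hx))). lia. destruct (q a); simpl; specialize (IHL' (fun x Hx => H x (or_intror Hx))); lia. }
  destruct Hx as [<-|Hx].
  - rewrite Hp, Hq. simpl. specialize (Hmono L (fun x Hx => H1 x (or_intror Hx))). lia.
  - specialize (IHL (fun x Hx => H1 x (or_intror Hx)) (ex_intro _ x (conj Hx (conj Hq Hp)))).
    destruct (p a) eqn:E. rewrite (H1 a (or_introl eq_refl) E). simpl. lia.
    destruct (q a); simpl; lia.
Qed.

Definition inT (l : nat -> R) (thr : R) (u : nat) : bool :=
  if Rle_dec thr (l u) then true else false.

Lemma tier (n nR : nat) (a b : nat -> nat) (kap l : nat -> R) eta :
  0 < eta -> (0<n)%nat ->
  (forall k, (k<nR)%nat -> eta < kap k < /eta) ->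
  (forall k, (k<nR)%nat -> (a k < n)%nat /\ (b k < n)%nat) ->
  (forall u v, (u<n)%nat -> (v<n)%nat ->
     clos_refl_trans nat (fun u v => exists k, (k<nR)%nat /\ a k = u /\ b k = v) u v) ->
  sumR nR (fun k => kap k * exp (l (a k)) * (l (b k) - l (a k))) <= 0 \/
  (forall u v, (u<n)%nat -> (v<n)%nat -> l v - l u <= theta eta nR n).
Proof.
  intros Heta Hn Hk Hab Hreach.
  set (M := maxl l (n-1)).
  assert (HM : forall u, (u < n)%nat -> l u <= M) by (intros; apply maxl_ge; lia).
  destruct (maxl_att l (n-1)) as [u0 [Hu0 Hu0M]]. fold M in Hu0M.
  set (D := sumR nR (fun k => kap k * exp (l (a k)) * (l (b k) - l (a k)))).
  set (cnt := fun j => length (filter (inT l (M - theta eta nR j)) (seq 0 n))).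
  assert (Hind : forall j, (j <= n)%nat -> D <= 0 \/
     (forall u v, (u<n)%nat -> (v<n)%nat -> l v - l u <= theta eta nR n) \/ (S j <= cnt j)%nat).
  { induction j; intros Hj.
    - right; right. unfold cnt. 
      eapply Nat.le_trans; [|apply (filter_strict (fun _ => false)); [discriminate|]]; [lia|].
      exists u0; split. apply in_seq; lia. unfold inT. simpl. destruct (Rle_dec (M - 0) (l u0)); auto. lra.
    - destruct (IHj ltac:(lia)) as [H|[H|H]]; [left; auto|right; left; auto|].
      assert (Hth0 := theta_nonneg eta nR j Heta).
      assert (Hthm : theta eta nR (S j) = theta eta nR j + hgap eta nR (theta eta nR j)) by reflexivity.
      assert (Hg1 := hgap_pos eta nR (theta eta nR j) Heta Hth0).
      destruct (classic (exists u, (u < n)%nat /\ M - theta eta nR (S j) <= l u < M - theta eta nR j)) as [[u [Hu Hband]]|Hnob].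
      + right; right. eapply Nat.le_trans with (S (cnt j)); [lia|].
        unfold cnt. apply filter_strict.
        * intros x _. unfold inT. destruct (Rle_dec (M - theta eta nR j) (l x)); try discriminate.
          destruct (Rle_dec (M - theta eta nR (S j)) (l x)); auto. lra.
        * exists u. split. apply in_seq; lia. unfold inT.
          destruct (Rle_dec (M - theta eta nR (S j)) (l u)); [|lra].
          destruct (Rle_dec (M - theta eta nR j) (l u)); [lra|]. auto.
      + destruct (classic (forall u, (u<n)%nat -> M - theta eta nR j <= l u)) as [Hall|Hnall].
        * right; left. intros u v Hu Hv. specialize (Hall u Hu). specialize (HM v Hv).
          assert (theta eta nR j <= theta eta nR n) by (apply theta_mono; [auto|lia]). lra.
        * left. apply not_all_ex_not in Hnall. destruct Hnall as [w Hw].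
          assert (Hw' : (w < n)%nat /\ l w < M - theta eta nR j).
          { destruct (classic (w < n)%nat). split; auto. apply Rnot_le_lt. intro; apply Hw; auto.
            exfalso; apply Hw; intro; contradiction. }
          destruct Hw' as [Hwn Hwl].
          destruct (crossing _ (fun u => (u < n)%nat /\ M - theta eta nR j <= l u) u0 w
                      (Hreach u0 w ltac:(lia) Hwn)) as [c [d [[k0 [Hk0 [Hc Hd]]] [Hcin Hdout]]]].
          { split. lia. rewrite Hu0M. lra. }
          { intros [_ ?]; lra. }
          subst c d.
          assert (Hband : forall k, (k<nR)%nat -> M - theta eta nR j <= l (a k) \/ l (a k) < M - theta eta nR j - hgap eta nR (theta eta nR j)).
          { intros k Hk'. destruct (Hab k Hk') as [Ha _].
            destruct (Rle_dec (M - theta eta nR j) (l (a k))). left; auto. right.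
            destruct (Rlt_dec (l (a k)) (M - theta eta nR j - hgap eta nR (theta eta nR j))); auto.
            exfalso. apply Hnob. exists (a k). split; auto. rewrite Hthm. lra. }
          apply (tier_estimate nR a b kap l eta M (theta eta nR j) k0); auto.
          { intros k Hk'; destruct (Hab k Hk'); split; apply HM; auto. }
          apply Hcin.
          destruct (Hab k0 Hk0) as [_ Hb0].
          destruct (Rle_dec (M - theta eta nR j) (l (b k0))). exfalso; apply Hdout; split; auto.
          destruct (Rlt_dec (l (b k0)) (M - theta eta nR j - hgap eta nR (theta eta nR j))); auto.
          exfalso. apply Hnob. exists (b k0). split; auto. rewrite Hthm. lra. }
  destruct (Hind n (le_n n)) as [H|[H|H]]; auto.
  exfalso. unfold cnt in H. pose proof (filter_length_le (inT l (M - theta eta nR n)) (seq 0 n)).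
  rewrite length_seq in H0. lia.
Qed.

Lemma sumR_sq_zero n f : sumR n (fun j => f j * f j) = 0 -> forall j, (j < n)%nat -> f j = 0.
Proof.
  induction n; simpl; intros H j Hj. lia.
  assert (0 <= sumR n (fun j => f j * f j)) by (apply sumR_nonneg; intros; nra).
  assert (0 <= f n * f n) by nra.
  destruct (Nat.eq_dec j n). subst. nra. apply IHn; [lra|lia].
Qed.

Lemma ginv (N m : nat) (d : nat -> nat -> R) :
  exists E : nat -> nat -> R,
   forall r j, (r < m)%nat -> (j < N)%nat ->
     sumR m (fun k => sumR N (fun i => E k i * d r i) * d k j) = d r j.
Proof.
  induction m.
  { exists (fun _ _ => 0). intros; lia. }
  destruct IHm as [E' HE'].
  set (Phi := fun (z : nat -> R) j => sumR m (fun k => sumR N (fun i => E' k i * z i) * d k j)).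
  set (P := fun j i => sumR m (fun k => d k j * E' k i)).
  assert (HPhi : forall z j, Phi z j = sumR N (fun i => P j i * z i)).
  { intros z j. unfold Phi, P.
    rewrite (sumR_ext m _ (fun k => sumR N (fun i => E' k i * z i * d k j))) by (intros; rewrite sumR_scalr; auto).
    rewrite sumR_swap. apply sumR_ext. intros i _. rewrite <- sumR_scalr. apply sumR_ext; intros; ring. }
  set (rho := fun j => d m j - Phi (d m) j).
  set (s := sumR N (fun j => rho j * rho j)).
  assert (Hs0 : 0 <= s) by (apply sumR_nonneg; intros; nra).
  destruct (Req_dec s 0) as [Hs|Hs].
  - exists (fun k i => if (k <? m)%nat then E' k i else 0).
    intros r j Hr Hj. simpl sumR.
    rewrite (sumR_ext m _ (fun k => sumR N (fun i => E' k i * d r i) * d k j)).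
    2:{ intros k Hk. apply Nat.ltb_lt in Hk. rewrite Hk. auto. }
    rewrite Nat.ltb_irrefl. rewrite (sumR_zero N (fun i => 0 * d r i)) by (intros; ring).
    destruct (Nat.eq_dec r m).
    + subst. pose proof (sumR_sq_zero N rho Hs j Hj). unfold rho, Phi in H. lra.
    + rewrite HE' by lia. ring.
  - assert (Hsp : 0 < s) by lra.
    set (lam := fun i => / s * (rho i - sumR N (fun j => rho j * P j i))).
    assert (Hlam : forall z, sumR N (fun i => lam i * z i) = / s * sumR N (fun j => rho j * (z j - Phi z j))).
    { intros z. unfold lam.
      rewrite (sumR_ext N _ (fun i => / s * (rho i * z i - sumR N (fun j => rho j * P j i * z i)))).
      2:{ intros i _. rewrite (sumR_scalr N (z i) (fun j => rho j * P j i)). ring. }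
      rewrite sumR_scal. f_equal. rewrite sumR_minus.
      rewrite (sumR_ext N (fun j => rho j * (z j - Phi z j)) (fun j => rho j * z j - sumR N (fun i => rho j * P j i * z i))).
      2:{ intros j _. rewrite HPhi, Rmult_minus_distr_l, <- sumR_scal. f_equal. apply sumR_ext; intros; ring. }
      rewrite sumR_minus. f_equal. apply sumR_swap. }
    set (ev := fun k => sumR N (fun i => E' k i * d m i)).
    exists (fun k i => if (k <? m)%nat then E' k i - lam i * ev k else lam i).
    intros r j Hr Hj. simpl sumR. rewrite Nat.ltb_irrefl.
    rewrite (sumR_ext m _ (fun k => (sumR N (fun i => E' k i * d r i) - sumR N (fun i => lam i * d r i) * ev k) * d k j)).
    2:{ intros k Hk. apply Nat.ltb_lt in Hk. rewrite Hk. f_equal.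
        rewrite <- sumR_scalr, <- sumR_minus. apply sumR_ext; intros; ring. }
    rewrite (sumR_ext m _ (fun k => sumR N (fun i => E' k i * d r i) * d k j - sumR N (fun i => lam i * d r i) * (ev k * d k j))) by (intros; ring).
    rewrite sumR_minus, sumR_scal. fold (Phi (d r) j). unfold ev. fold (Phi (d m) j).
    rewrite Hlam.
    destruct (Nat.eq_dec r m).
    + subst. change (sumR N (fun j0 => rho j0 * (d m j0 - Phi (d m) j0))) with s. replace (/ s * s) with 1 by (field; lra).
      unfold rho. ring.
    + assert (Hdr : forall j', (j' < N)%nat -> Phi (d r) j' = d r j') by (intros; unfold Phi; apply HE'; lia).
      rewrite (sumR_zero N (fun j0 => rho j0 * (d r j0 - Phi (d r) j0))).
      2:{ intros j' Hj'. rewrite Hdr by auto. ring. }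
      rewrite Hdr by auto. ring.
Qed.

Lemma dlim_cont f x l : derivable_pt_lim f x l -> continuity_pt f x.
Proof. intros H. apply derivable_continuous_pt. exists l; auto. Qed.

Lemma cont_pos f x : continuity_pt f x -> 0 < f x ->
  exists del, 0 < del /\ forall y, Rabs (y - x) < del -> 0 < f y.
Proof.
  intros H Hx. unfold continuity_pt, continue_in, limit1_in, limit_in in H.
  destruct (H (f x / 2)) as [alp [Halp Hal]]. lra.
  exists alp; split; auto. intros y Hy.
  destruct (Req_dec y x). subst; auto.
  assert (Hd : R_dist (f y) (f x) < f x / 2).
  { apply (Hal y). split. split. constructor. auto. simpl. unfold R_dist. auto. }
  unfold R_dist in Hd. apply Rabs_def2 in Hd. lra.
Qed.

Lemma first_time (h : R -> R) a b : a <= b ->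
  (forall t, a <= t <= b -> 0 < h t -> exists del, 0 < del /\ forall y, Rabs (y - t) < del -> 0 < h y) ->
  0 < h a -> h b <= 0 ->
  exists ts, a < ts <= b /\ h ts <= 0 /\ forall s, a <= s < ts -> 0 < h s.
Proof.
  intros Hab Hloc Ha Hb.
  set (E := fun s => a <= s <= b /\ forall r, a <= r <= s -> 0 < h r).
  assert (HEa : E a). { split. lra. intros r Hr. replace r with a by lra. auto. }
  assert (HEb : bound E). { exists b. intros s [Hs _]. lra. }
  destruct (completeness E HEb (ex_intro _ a HEa)) as [ts [Hub Hlub]].
  assert (Hts1 : a <= ts) by (apply Hub; auto).
  assert (Hts2 : ts <= b). { apply Hlub. intros s [Hs _]. lra. }
  assert (Hbelow : forall s, a <= s < ts -> 0 < h s).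
  { intros s Hs. destruct (classic (exists e, E e /\ s < e)) as [[e [[He1 He2] Hse]]|Hno].
    - apply He2. lra.
    - exfalso. assert (ts <= s). { apply Hlub. intros e He. destruct (Rle_dec e s); auto. exfalso; apply Hno; exists e; split; auto; lra. }
      lra. }
  assert (Hhts : h ts <= 0).
  { destruct (Rle_dec (h ts) 0) as [|Hpos]; auto. apply Rnot_le_lt in Hpos.
    destruct (Req_dec ts b). subst; lra.
    destruct (Hloc ts ltac:(lra) Hpos) as [del [Hdel Hd]].
    set (s' := Rmin b (ts + del/2)).
    assert (Hs'1 : ts < s'). { unfold s'. apply Rmin_glb_lt; lra. }
    assert (Hs'2 : s' <= b) by apply Rmin_l.
    assert (Hs'3 : s' <= ts + del/2) by apply Rmin_r.
    assert (E s').
    { split. lra. intros r Hr. destruct (Rlt_dec r ts). apply Hbelow; lra.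
      apply Hd. rewrite Rabs_right; lra. }
    assert (s' <= ts) by (apply Hub; auto). lra. }
  exists ts. split; [|split; auto].
  split; auto. destruct Hts1 as [|Heq]; auto. subst. lra.
Qed.

Fixpoint minR (n:nat) (f : nat -> R) : R :=
  match n with O => 1 | S m => Rmin (minR m f) (f m) end.

Lemma minR_pos n f : (forall i, (i<n)%nat -> 0 < f i) -> 0 < minR n f.
Proof. induction n; simpl; intros H. lra. apply Rmin_glb_lt. apply IHn; intros; apply H; lia. apply H; lia. Qed.
Lemma minR_le n f i : (i < n)%nat -> minR n f <= f i.
Proof. induction n; simpl; intros H. lia. destruct (Nat.eq_dec i n). subst; apply Rmin_r.
  eapply Rle_trans. apply Rmin_l. apply IHn; lia. Qed.
Lemma minR_nonpos n f : minR n f <= 0 -> exists i, (i < n)%nat /\ f i <= 0.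
Proof. intros H. apply NNPP. intro Hn. assert (0 < minR n f); [|lra]. apply minR_pos.
  intros i Hi. apply Rnot_le_lt. intro; apply Hn; exists i; auto. Qed.

Lemma minR_loc n (F : R -> nat -> R) t :
  (forall i, (i<n)%nat -> continuity_pt (fun s => F s i) t) ->
  0 < minR n (F t) -> exists del, 0 < del /\ forall y, Rabs (y - t) < del -> 0 < minR n (F y).
Proof.
  induction n; simpl; intros Hc Hpos.
  exists 1; split; [lra|]; intros; lra.
  assert (H1 : 0 < minR n (F t)) by (eapply Rlt_le_trans; [apply Hpos|apply Rmin_l]).
  assert (H2 : 0 < F t n) by (eapply Rlt_le_trans; [apply Hpos|apply Rmin_r]).
  destruct (IHn (fun i Hi => Hc i ltac:(lia)) H1) as [d1 [Hd1 Hy1]].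
  destruct (cont_pos (fun s => F s n) t (Hc n ltac:(lia)) H2) as [d2 [Hd2 Hy2]].
  exists (Rmin d1 d2). split. apply Rmin_glb_lt; auto.
  intros y Hy. apply Rmin_glb_lt. apply Hy1. eapply Rlt_le_trans; [apply Hy|apply Rmin_l].
  apply (Hy2 y). eapply Rlt_le_trans; [apply Hy|apply Rmin_r].
Qed.

Lemma pow_cont f t c : continuity_pt f t -> continuity_pt (fun s => f s ^ c) t.
Proof. intros H. induction c; simpl. apply continuity_pt_const; intros ? ?; auto.
  apply (continuity_pt_mult f (fun s => f s ^ c)); auto. Qed.

Definition nRx G := length (reactions G).
Definition src G k := fst (nth k (reactions G) (0%nat,0%nat)).
Definition tgt G k := snd (nth k (reactions G) (0%nat,0%nat)).
Definition cf G a i := INR (coef (cplx G a) i).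
Definition dv G k i := cf G (tgt G k) i - cf G (src G k) i.
Definition mono N y (x : nat -> R) := prodR N (fun i => x i ^ coef y i).
Definition qmono N y i (x : nat -> R) :=
  prodR N (fun j => if (j =? i)%nat then x j ^ (coef y j - 1) else x j ^ coef y j).

Lemma rhs_eq N G kappa t x i : mass_action_rhs N G kappa t x i =
  sumR (nRx G) (fun k => kappa k t * mono N (cplx G (src G k)) x * dv G k i).
Proof. unfold mass_action_rhs. rewrite fold_sum. apply sumR_ext. intros. unfold monomial. rewrite fold_prod. reflexivity. Qed.

Lemma mono_factor N y i x : (i<N)%nat -> (1 <= coef y i)%nat -> mono N y x = x i * qmono N y i x.
Proof.
  intros Hi Hc. unfold mono, qmono. induction N. lia. simpl.
  destruct (Nat.eq_dec i N).
  - subst. rewrite Nat.eqb_refl.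
    rewrite (prodR_ext N (fun j => if (j =? N)%nat then x j ^ (coef y j - 1) else x j ^ coef y j) (fun i => x i ^ coef y i)).
    2:{ intros j Hj. destruct (Nat.eqb_spec j N); [lia|auto]. }
    assert (Hp : x N ^ coef y N = x N * x N ^ (coef y N - 1)).
    { destruct (coef y N) eqn:E. lia. simpl. rewrite Nat.sub_0_r. auto. }
    rewrite Hp. ring.
  - rewrite IHN by lia. destruct (Nat.eqb_spec N i); [lia|]. ring.
Qed.

Lemma mono_nonneg N y x : (forall j, (j<N)%nat -> 0 <= x j) -> 0 <= mono N y x.
Proof. intros H. apply prodR_nonneg. intros; apply pow_le; auto. Qed.
Lemma qmono_nonneg N y i x : (forall j, (j<N)%nat -> 0 <= x j) -> 0 <= qmono N y i x.
Proof. intros H. apply prodR_nonneg. intros. destruct (_ =? _)%nat; apply pow_le; auto. Qed.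

Lemma rhs_lower N G (kap : nat -> R) eta x i :
  0 < eta -> (forall k, (k < nRx G)%nat -> eta < kap k < /eta) ->
  (forall j, (j<N)%nat -> 0 <= x j) -> (i < N)%nat ->
  - (/eta * x i * sumR (nRx G) (fun k => qmono N (cplx G (src G k)) i x * Rabs (dv G k i)))
  <= sumR (nRx G) (fun k => kap k * mono N (cplx G (src G k)) x * dv G k i).
Proof.
  intros He Hk Hx Hi. rewrite <- sumR_scal. 
  replace (- sumR (nRx G) (fun k => / eta * x i * (qmono N (cplx G (src G k)) i x * Rabs (dv G k i))))
    with (sumR (nRx G) (fun k => - (/ eta * x i * (qmono N (cplx G (src G k)) i x * Rabs (dv G k i))))).
  2:{ set (F := fun k => / eta * x i * (qmono N (cplx G (src G k)) i x * Rabs (dv G k i))). replace (- sumR (nRx G) F) with (-1 * sumR (nRx G) F) by ring. rewrite <- sumR_scal. apply sumR_ext; intros; unfold F; ring. }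
  apply sumR_le. intros k Hkk. destruct (Hk k Hkk) as [Hk1 Hk2].
  assert (Hq := qmono_nonneg N (cplx G (src G k)) i x Hx).
  assert (Hxi := Hx i Hi). assert (Hie : 0 < /eta) by (apply Rinv_0_lt_compat; auto).
  assert (HA := Rabs_pos (dv G k i)).
  destruct (coef (cplx G (src G k)) i) eqn:Hc.
  - assert (Hd : 0 <= dv G k i). { unfold dv, cf. rewrite Hc. simpl. pose proof (pos_INR (coef (cplx G (tgt G k)) i)). lra. }
    assert (0 <= mono N (cplx G (src G k)) x) by (apply mono_nonneg; auto).
    assert (0 <= kap k * mono N (cplx G (src G k)) x * dv G k i) by (apply Rmult_le_pos; [apply Rmult_le_pos|]; lra).
    assert (0 <= / eta * x i * (qmono N (cplx G (src G k)) i x * Rabs (dv G k i))) by (repeat apply Rmult_le_pos; lra).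
    lra.
  - rewrite (mono_factor N _ i x Hi) by lia.
    set (q := qmono N (cplx G (src G k)) i x) in *.
    assert (Hd := Rle_abs (- dv G k i)). rewrite Rabs_Ropp in Hd.
    assert (0 <= x i * q) by nra.
    assert (kap k * (x i * q) * dv G k i >= - (kap k * (x i * q) * Rabs (dv G k i))).
    { assert (0 <= kap k * (x i * q)) by (apply Rmult_le_pos; lra).
      assert (kap k * (x i * q) * (- dv G k i) <= kap k * (x i * q) * Rabs (dv G k i)) by (apply Rmult_le_compat_l; auto).
      lra. }
    assert (kap k * (x i * q) * Rabs (dv G k i) <= /eta * (x i * q) * Rabs (dv G k i)).
    { apply Rmult_le_compat_r; auto. apply Rmult_le_compat_r; lra. }
    nra.
Qed.

Lemma sol_cont N G kappa x0 phi : is_solution N G kappa x0 phi ->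
  forall t i, 0 <= t -> (i<N)%nat -> continuity_pt (fun s => phi s i) t.
Proof. intros [_ H] t i Ht Hi. eapply dlim_cont. apply H; auto. Qed.

Lemma positivity N G kappa x0 phi eta :
  0 < eta -> (forall k t, (k < nRx G)%nat -> 0 <= t -> eta < kappa k t < /eta) ->
  (forall i, (i<N)%nat -> 0 < x0 i) -> is_solution N G kappa x0 phi ->
  forall t i, 0 <= t -> (i<N)%nat -> 0 < phi t i.
Proof.
  intros Heta Hk Hx0 Hphi t1 i1 Ht1 Hi1. apply Rnot_le_lt. intro Hneg.
  assert (Hcont := sol_cont N G kappa x0 phi Hphi).
  destruct (first_time (fun s => minR N (phi s)) 0 t1 Ht1) as [ts [[Hts0 Hts1] [Hhts Hbef]]].
  { intros s Hs Hp. apply minR_loc; auto. intros; apply Hcont; auto; lra. }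
  { apply minR_pos. intros i Hi. destruct Hphi as [H0 _]. rewrite H0; auto. }
  { eapply Rle_trans. apply (minR_le N (phi t1) i1 Hi1). auto. }
  destruct (minR_nonpos N (phi ts) Hhts) as [i [Hi Hpi]].
  assert (Hallpos : forall s j, 0 <= s < ts -> (j < N)%nat -> 0 < phi s j).
  { intros s j Hs Hj. eapply Rlt_le_trans. apply (Hbef s Hs). apply minR_le; auto. }
  set (Q := fun s => sumR (nRx G) (fun k => qmono N (cplx G (src G k)) i (phi s) * Rabs (dv G k i))).
  assert (HQc : forall s, 0 <= s <= ts -> continuity_pt Q s).
  { intros s Hs. unfold Q. apply (sumR_cont (nRx G) (fun s k => qmono N (cplx G (src G k)) i (phi s) * Rabs (dv G k i))).
    intros k Hk'. apply (continuity_pt_mult (fun s => qmono N (cplx G (src G k)) i (phi s)) (fun _ => Rabs (dv G k i))).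
    - unfold qmono. apply (prodR_cont N (fun s j => if (j =? i)%nat then phi s j ^ (coef (cplx G (src G k)) j - 1) else phi s j ^ coef (cplx G (src G k)) j)).
      intros j Hj. destruct (j =? i)%nat; apply (pow_cont (fun s => phi s j)); apply Hcont; auto; lra.
    - apply continuity_pt_const; intros ? ?; auto. }
  destruct (continuity_ab_maj Q 0 ts ltac:(lra) HQc) as [Mx [HMx _]].
  set (Gc := Rmax 0 (Q Mx) / eta).
  assert (HGc : forall s, 0 <= s <= ts -> Q s / eta <= Gc).
  { intros s Hs. unfold Gc, Rdiv. apply Rmult_le_compat_r. left; apply Rinv_0_lt_compat; auto.
    eapply Rle_trans. apply HMx; auto. apply Rmax_r. }
  set (z := fun s => phi s i * exp (Gc * s)).
  set (z' := fun s => mass_action_rhs N G kappa s (phi s) i * exp (Gc * s) + phi s i * (exp (Gc * s) * (Gc * 1))).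
  assert (Hz : forall s, 0 <= s <= ts -> derivable_pt_lim z s (z' s)).
  { intros s Hs. unfold z, z'.
    apply (derivable_pt_lim_mult (fun s => phi s i) (fun s => exp (Gc * s))).
    - destruct Hphi as [_ H]. apply H; auto. lra.
    - apply (derivable_pt_lim_comp (fun s => Gc * s) exp). apply (derivable_pt_lim_scal id). apply derivable_pt_lim_id.
      apply derivable_pt_lim_exp. }
  destruct (MVT_cor2 z z' 0 ts Hts0 Hz) as [c [Hmvt Hc]].
  assert (Hzc : 0 <= z' c).
  { unfold z'. rewrite rhs_eq.
    assert (Hxc : forall j, (j<N)%nat -> 0 <= phi c j) by (intros; left; apply Hallpos; auto; lra).
    assert (Hlow := rhs_lower N G (fun k => kappa k c) eta (phi c) i Heta (fun k Hk' => Hk k c Hk' ltac:(lra)) Hxc Hi).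
    fold (Q c) in Hlow.
    assert (HQ := HGc c ltac:(lra)).
    assert (Hpc : 0 < phi c i) by (apply Hallpos; auto; lra).
    assert (Hex : 0 < exp (Gc * c)) by apply exp_pos.
    assert (/ eta * phi c i * Q c <= phi c i * Gc).
    { replace (/eta * phi c i * Q c) with (phi c i * (Q c / eta)) by (unfold Rdiv; ring).
      apply Rmult_le_compat_l; lra. }
    assert (0 <= sumR (nRx G) (fun k => kappa k c * mono N (cplx G (src G k)) (phi c) * dv G k i) + phi c i * Gc) by lra.
    replace (sumR (nRx G) (fun k => kappa k c * mono N (cplx G (src G k)) (phi c) * dv G k i) * exp (Gc * c) +
      phi c i * (exp (Gc * c) * (Gc * 1))) with
      (exp (Gc * c) * (sumR (nRx G) (fun k => kappa k c * mono N (cplx G (src G k)) (phi c) * dv G k i) + phi c i * Gc)) by ring.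
    apply Rmult_le_pos; lra. }
  assert (Hz0 : z 0 = x0 i). { unfold z. destruct Hphi as [H0 _]. rewrite H0 by auto. rewrite Rmult_0_r, exp_0. ring. }
  assert (Hzts : z ts <= 0). { unfold z. assert (0 < exp (Gc * ts)) by apply exp_pos. nra. }
  assert (0 < x0 i) by auto. nra.
Qed.

Lemma dlim_eq f t l l' : derivable_pt_lim f t l -> l = l' -> derivable_pt_lim f t l'.
Proof. intros H ->; auto. Qed.

Lemma dlim_scal c f t l : derivable_pt_lim f t l -> derivable_pt_lim (fun s => c * f s) t (c * l).
Proof. intros H. apply (derivable_pt_lim_scal f c t l H). Qed.

Lemma dlim_minus_const c f t l : derivable_pt_lim f t l -> derivable_pt_lim (fun s => f s - c) t l.
Proof. intros H. apply dlim_eq with (l - 0). apply (derivable_pt_lim_minus f (fun _ => c)); auto.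
  apply derivable_pt_lim_const. ring. Qed.

Lemma dlim_mult_const c f t l : derivable_pt_lim f t l -> derivable_pt_lim (fun s => f s * c) t (l * c).
Proof. intros H. apply dlim_eq with (l * c + f t * 0). apply (derivable_pt_lim_mult f (fun _ => c)); auto.
  apply derivable_pt_lim_const. ring. Qed.

Lemma mono_exp N y x : (forall i, (i<N)%nat -> 0 < x i) ->
  mono N y x = exp (sumR N (fun i => INR (coef y i) * ln (x i))).
Proof.
  intros H. unfold mono. rewrite <- prodR_exp. apply prodR_ext. intros i Hi.
  rewrite <- ln_pow by auto. rewrite exp_ln; auto. apply pow_lt; auto.
Qed.

Lemma reproduce N m (E d : nat -> nat -> R) (f : nat -> R) :
  (forall r j, (r<m)%nat -> (j<N)%nat -> sumR m (fun k => sumR N (fun i => E k i * d r i) * d k j) = d r j) ->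
  forall j, (j<N)%nat ->
  sumR m (fun k => sumR N (fun i => E k i * sumR m (fun r => f r * d r i)) * d k j) = sumR m (fun r => f r * d r j).
Proof.
  intros H j Hj.
  rewrite (sumR_ext m _ (fun k => sumR m (fun r => f r * sumR N (fun i => E k i * d r i)) * d k j)).
  2:{ intros k Hk. f_equal.
      rewrite (sumR_ext N _ (fun i => sumR m (fun r => E k i * (f r * d r i)))) by (intros; rewrite sumR_scal; auto).
      rewrite sumR_swap. apply sumR_ext. intros r _. rewrite <- sumR_scal. apply sumR_ext; intros; ring. }
  rewrite (sumR_ext m _ (fun k => sumR m (fun r => f r * (sumR N (fun i => E k i * d r i) * d k j)))).
  2:{ intros k _. rewrite <- sumR_scalr. apply sumR_ext; intros; ring. }
  rewrite sumR_swap. apply sumR_ext. intros r Hr. rewrite sumR_scal. rewrite H; auto.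
Qed.

Lemma conservation N G kappa x0 phi (E : nat -> nat -> R) :
  is_solution N G kappa x0 phi ->
  (forall r j, (r < nRx G)%nat -> (j<N)%nat ->
     sumR (nRx G) (fun k => sumR N (fun i => E k i * dv G r i) * dv G k j) = dv G r j) ->
  forall t j, 0 <= t -> (j < N)%nat ->
  phi t j - x0 j = sumR (nRx G) (fun k => sumR N (fun i => E k i * (phi t i - x0 i)) * dv G k j).
Proof.
  intros Hphi HE t j Ht Hj.
  set (y := fun s => (phi s j - x0 j) - sumR (nRx G) (fun k => sumR N (fun i => E k i * (phi s i - x0 i)) * dv G k j)).
  assert (Hy0 : y 0 = 0).
  { unfold y. destruct Hphi as [H0 _]. rewrite H0 by auto.
    rewrite (sumR_zero (nRx G)); [ring|]. intros k _. rewrite (sumR_zero N). ring.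
    intros i Hi. rewrite H0 by auto. ring. }
  assert (Hyd : forall s, 0 <= s -> derivable_pt_lim y s 0).
  { intros s Hs. destruct Hphi as [_ Hd]. unfold y.
    apply dlim_eq with (mass_action_rhs N G kappa s (phi s) j -
       sumR (nRx G) (fun k => sumR N (fun i => E k i * mass_action_rhs N G kappa s (phi s) i) * dv G k j)).
    - apply (derivable_pt_lim_minus (fun s => phi s j - x0 j)
              (fun s => sumR (nRx G) (fun k => sumR N (fun i => E k i * (phi s i - x0 i)) * dv G k j))).
      + apply dlim_minus_const. apply Hd; auto.
      + apply (sumR_deriv (nRx G) (fun s k => sumR N (fun i => E k i * (phi s i - x0 i)) * dv G k j)).
        intros k Hk. apply dlim_mult_const.
        apply (sumR_deriv N (fun s i => E k i * (phi s i - x0 i))).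
        intros i Hi. apply dlim_scal. apply dlim_minus_const. apply Hd; auto.
    - rewrite (sumR_ext (nRx G) (fun k => sumR N (fun i => E k i * mass_action_rhs N G kappa s (phi s) i) * dv G k j)
                 (fun k => sumR N (fun i => E k i * sumR (nRx G) (fun r => (kappa r s * mono N (cplx G (src G r)) (phi s)) * dv G r i)) * dv G k j)).
      2:{ intros k _. f_equal. apply sumR_ext. intros i _. rewrite rhs_eq. auto. }
      rewrite rhs_eq.
      rewrite (reproduce N (nRx G) E (dv G)); auto. ring. }
  destruct Ht as [Ht|Ht].
  - destruct (MVT_cor2 y (fun _ => 0) 0 t Ht (fun c Hc => Hyd c ltac:(lra))) as [c [Hc _]].
    assert (y t = 0) by (rewrite Hy0 in Hc; lra). unfold y in H. lra.
  - subst. assert (y 0 = 0) by auto. unfold y in H. lra.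
Qed.

Lemma ln_le' x y : 0 < x -> x <= y -> ln x <= ln y.
Proof. intros Hx [H|H]. left; apply ln_increasing; auto. subst; lra. Qed.

Lemma sumR_abs n f : Rabs (sumR n f) <= sumR n (fun i => Rabs (f i)).
Proof. induction n; simpl. rewrite Rabs_R0; lra. eapply Rle_trans. apply Rabs_triang. lra. Qed.

Lemma sumR_single n f i : (i < n)%nat -> (forall j, (j<n)%nat -> 0 <= f j) -> f i <= sumR n f.
Proof. intros Hi H. induction n; simpl. lia.
  assert (0 <= sumR n f) by (apply sumR_nonneg; intros; apply H; lia).
  destruct (Nat.eq_dec i n). subst. lra. assert (f i <= sumR n f) by (apply IHn; [lia|intros; apply H; lia]).
  assert (0 <= f n) by (apply H; lia). lra. Qed.

Lemma single_bound n t a i : (i < n)%nat -> (forall j, (j<n)%nat -> - a j <= t j) ->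
  (forall j, (j<n)%nat -> 0 <= a j) -> sumR n t <= 0 -> t i <= sumR n a.
Proof.
  intros Hi H1 H2 H3.
  assert (t i + a i <= sumR n (fun j => t j + a j)).
  { apply (sumR_single n (fun j => t j + a j)); auto. intros j Hj. specialize (H1 j Hj). lra. }
  rewrite sumR_plus in H. specialize (H2 i Hi). lra.
Qed.

Lemma coord x x0 M0 : 0 < x -> 0 < x0 -> 0 <= M0 ->
  let z := x - x0 in let w := ln x - ln x0 in let c := x0 * (exp (M0+1) + 1) in
  - M0 * c <= z * w - M0 * Rabs z /\ Rabs z <= z * w - M0 * Rabs z + (M0+1) * c.
Proof.
  intros Hx Hx0 HM z w c.
  assert (Hzw : z * w = Rabs z * Rabs w).
  { unfold z, w. destruct (Rle_dec x0 x).
    - assert (ln x0 <= ln x) by (apply ln_le'; auto). rewrite !Rabs_right by lra. auto.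
    - assert (ln x < ln x0) by (apply ln_increasing; lra). rewrite !Rabs_left by lra. ring. }
  rewrite Hzw.
  assert (Hxe : x = x0 * exp w).
  { unfold w. rewrite <- (exp_ln x0) at 1 by auto. rewrite <- exp_plus. rewrite <- (exp_ln x) at 1 by auto. f_equal. ring. }
  assert (He : 0 < exp (M0 + 1)) by apply exp_pos.
  assert (Hc : 0 <= c) by (unfold c; nra).
  assert (Haz := Rabs_pos z). assert (Haw := Rabs_pos w).
  destruct (Rle_dec (M0 + 1) (Rabs w)).
  - assert (Rabs z <= Rabs z * Rabs w - M0 * Rabs z) by nra.
    split; nra.
  - assert (Hw : w < M0 + 1) by (pose proof (Rle_abs w); lra).
    assert (exp w <= exp (M0+1)) by (left; apply exp_increasing; auto).
    assert (x <= x0 * exp (M0 + 1)) by (rewrite Hxe; apply Rmult_le_compat_l; lra).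
    assert (Rabs z <= c). { unfold z, c. apply Rabs_le. split; nra. }
    assert (0 <= Rabs z * Rabs w) by nra.
    split; nra.
Qed.

Definition ellx N G (x : nat -> R) a := sumR N (fun i => cf G a i * ln (x i)).

Lemma dv_ell N G x k : sumR N (fun i => dv G k i * ln (x i)) = ellx N G x (tgt G k) - ellx N G x (src G k).
Proof. unfold ellx, dv. rewrite <- sumR_minus. apply sumR_ext; intros; ring. Qed.

Lemma region N G (E : nat -> nat -> R) (x0 x : nat -> R) Th :
  0 <= Th -> (forall i, (i<N)%nat -> 0 < x0 i) -> (forall i, (i<N)%nat -> 0 < x i) ->
  (forall j, (j < N)%nat -> x j - x0 j = sumR (nRx G) (fun k => sumR N (fun i => E k i * (x i - x0 i)) * dv G k j)) ->
  (forall k, (k < nRx G)%nat -> Rabs (ellx N G x (tgt G k) - ellx N G x (src G k)) <= Th) ->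
  let Kc := sumR (nRx G) (fun k => sumR N (fun i => Rabs (E k i))) in
  let L0 := sumR N (fun j => Rabs (ln (x0 j))) in
  let M0 := Th * Kc + L0 in
  let cc := fun j => x0 j * (exp (M0+1) + 1) in
  forall i, (i < N)%nat -> x i <= sumR N (fun i => x0 i + M0 * sumR N cc + (M0+1) * cc i).
Proof.
  intros HTh Hx0 Hx Hcons Hell Kc L0 M0 cc i Hi.
  set (z := fun j => x j - x0 j).
  set (Z := sumR N (fun j => Rabs (z j))).
  assert (HZ0 : 0 <= Z) by (apply sumR_nonneg; intros; apply Rabs_pos).
  assert (HKc : 0 <= Kc) by (apply sumR_nonneg; intros; apply sumR_nonneg; intros; apply Rabs_pos).
  assert (HL0 : 0 <= L0) by (apply sumR_nonneg; intros; apply Rabs_pos).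
  assert (HM0 : 0 <= M0) by (unfold M0; nra).
  set (ck := fun k => sumR N (fun i => E k i * z i)).
  assert (S1 : sumR N (fun j => z j * ln (x j)) = sumR (nRx G) (fun k => ck k * (ellx N G x (tgt G k) - ellx N G x (src G k)))).
  { rewrite (sumR_ext N _ (fun j => sumR (nRx G) (fun k => ck k * (dv G k j * ln (x j))))).
    2:{ intros j Hj. unfold z. rewrite Hcons by auto. rewrite <- sumR_scalr. apply sumR_ext; intros; unfold ck, z; ring. }
    rewrite sumR_swap. apply sumR_ext. intros k _. rewrite sumR_scal, dv_ell. auto. }
  assert (S2 : sumR (nRx G) (fun k => ck k * (ellx N G x (tgt G k) - ellx N G x (src G k))) <= Th * Kc * Z).
  { replace (Th * Kc * Z) with (sumR (nRx G) (fun k => Th * (sumR N (fun i => Rabs (E k i)) * Z)))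
      by (unfold Kc; rewrite sumR_scal, sumR_scalr; ring).
    apply sumR_le. intros k Hk.
    assert (Hck : Rabs (ck k) <= sumR N (fun i => Rabs (E k i)) * Z).
    { eapply Rle_trans. apply sumR_abs. rewrite <- sumR_scalr. apply sumR_le. intros i' Hi'.
      rewrite Rabs_mult. apply Rmult_le_compat_l. apply Rabs_pos.
      apply (sumR_single N (fun j => Rabs (z j))); auto. intros; apply Rabs_pos. }
    specialize (Hell k Hk).
    eapply Rle_trans. apply Rle_abs. rewrite Rabs_mult.
    assert (0 <= sumR N (fun i => Rabs (E k i)) * Z) by (apply Rmult_le_pos; auto; apply sumR_nonneg; intros; apply Rabs_pos).
    assert (Rabs (ck k) * Rabs (ellx N G x (tgt G k) - ellx N G x (src G k)) <= sumR N (fun i => Rabs (E k i)) * Z * Th).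
    { apply Rmult_le_compat; auto; apply Rabs_pos. }
    replace (Th * (sumR N (fun i => Rabs (E k i)) * Z)) with (sumR N (fun i => Rabs (E k i)) * Z * Th) by ring.
    lra. }
  assert (S3 : - sumR N (fun j => z j * ln (x0 j)) <= L0 * Z).
  { replace (L0 * Z) with (sumR N (fun j => Rabs (ln (x0 j)) * Z)) by (unfold L0; rewrite sumR_scalr; auto).
    apply Rle_trans with (Rabs (sumR N (fun j => z j * ln (x0 j)))).
    { rewrite <- Rabs_Ropp. apply Rle_abs. }
    eapply Rle_trans. apply sumR_abs. apply sumR_le. intros j Hj. rewrite Rabs_mult.
    rewrite Rmult_comm. apply Rmult_le_compat_l. apply Rabs_pos.
    apply (sumR_single N (fun j => Rabs (z j))); auto. intros; apply Rabs_pos. }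
  set (tt := fun j => z j * (ln (x j) - ln (x0 j)) - M0 * Rabs (z j)).
  assert (Hsum : sumR N tt <= 0).
  { unfold tt. rewrite sumR_minus, sumR_scal.
    rewrite (sumR_ext N _ (fun j => z j * ln (x j) - z j * ln (x0 j))) by (intros; ring).
    rewrite sumR_minus. fold Z. unfold M0. lra. }
  assert (Hco : forall j, (j < N)%nat -> - M0 * cc j <= tt j /\ Rabs (z j) <= tt j + (M0+1) * cc j).
  { intros j Hj. apply (coord (x j) (x0 j) M0); auto. }
  assert (Hti : tt i <= sumR N (fun j => M0 * cc j)).
  { apply single_bound; auto. intros j Hj. destruct (Hco j Hj). lra.
    intros j Hj. unfold cc. assert (0 < exp (M0+1)) by apply exp_pos. specialize (Hx0 j Hj). apply Rmult_le_pos; [auto|]; apply Rmult_le_pos; lra. }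
  rewrite sumR_scal in Hti.
  destruct (Hco i Hi) as [_ Hzi].
  assert (Hxi : x i <= x0 i + M0 * sumR N cc + (M0+1) * cc i).
  { assert (z i <= Rabs (z i)) by apply Rle_abs. assert (x i = x0 i + z i) by (unfold z; ring). lra. }
  eapply Rle_trans. apply Hxi.
  apply (sumR_single N (fun i => x0 i + M0 * sumR N cc + (M0 + 1) * cc i)); auto.
  intros j Hj. assert (0 <= sumR N cc).
  { apply sumR_nonneg. intros; unfold cc. assert (0 < exp (M0+1)) by apply exp_pos. specialize (Hx0 i0 H). apply Rmult_le_pos; lra. }
  assert (0 < exp (M0+1)) by apply exp_pos. specialize (Hx0 j Hj).
  assert (0 <= cc j) by (unfold cc; apply Rmult_le_pos; lra).
  assert (0 <= M0 * sumR N cc) by (apply Rmult_le_pos; lra).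
  assert (0 <= (M0 + 1) * cc j) by (apply Rmult_le_pos; lra).
  lra.
Qed.

Definition Vf N (x : nat -> R) := sumR N (fun i => x i * ln (x i) - x i).

Lemma V_deriv N G kappa x0 phi t :
  is_solution N G kappa x0 phi -> 0 <= t -> (forall i, (i<N)%nat -> 0 < phi t i) ->
  derivable_pt_lim (fun s => Vf N (phi s)) t
    (sumR N (fun i => mass_action_rhs N G kappa t (phi t) i * ln (phi t i))).
Proof.
  intros [_ Hd] Ht Hpos. unfold Vf.
  apply (sumR_deriv N (fun s i => phi s i * ln (phi s i) - phi s i)).
  intros i Hi. specialize (Hpos i Hi). set (r := mass_action_rhs N G kappa t (phi t) i).
  apply dlim_eq with (r * ln (phi t i) + phi t i * (/ phi t i * r) - r).
  - apply (derivable_pt_lim_minus (fun s => phi s i * ln (phi s i)) (fun s => phi s i)).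
    + apply (derivable_pt_lim_mult (fun s => phi s i) (fun s => ln (phi s i))).
      apply Hd; auto.
      apply (derivable_pt_lim_comp (fun s => phi s i) ln). apply Hd; auto. apply derivable_pt_lim_ln; auto.
    + apply Hd; auto.
  - field. lra.
Qed.

Lemma D_eq N G (kap : nat -> R) x : (forall i, (i<N)%nat -> 0 < x i) ->
  sumR N (fun i => sumR (nRx G) (fun k => kap k * mono N (cplx G (src G k)) x * dv G k i) * ln (x i)) =
  sumR (nRx G) (fun k => kap k * exp (ellx N G x (src G k)) * (ellx N G x (tgt G k) - ellx N G x (src G k))).
Proof.
  intros Hx.
  rewrite (sumR_ext N _ (fun i => sumR (nRx G) (fun k => kap k * mono N (cplx G (src G k)) x * (dv G k i * ln (x i))))).
  2:{ intros i _. rewrite <- sumR_scalr. apply sumR_ext; intros; ring. }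
  rewrite sumR_swap. apply sumR_ext. intros k _. rewrite sumR_scal, dv_ell. f_equal. f_equal.
  rewrite mono_exp by auto. auto.
Qed.

Lemma xlnx_lower x : 0 < x -> -1 <= x * ln x - x.
Proof.
  intros Hx. assert (H := exp_ineq1_le (ln (/ x))). rewrite exp_ln in H by (apply Rinv_0_lt_compat; auto).
  rewrite ln_Rinv in H by auto.
  assert (x * (1 + - ln x) <= x * / x) by (apply Rmult_le_compat_l; lra).
  rewrite Rinv_r in H0 by lra. nra.
Qed.

Lemma xlnx_upper x C : 0 < x -> x * ln x - x <= C -> x <= Rmax (exp 2) C.
Proof.
  intros Hx H. destruct (Rle_dec x (exp 2)). eapply Rle_trans; [eauto|apply Rmax_l].
  assert (ln (exp 2) < ln x) by (apply ln_increasing; [apply exp_pos|lra]). rewrite ln_exp in H0.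
  eapply Rle_trans; [|apply Rmax_r]. nra.
Qed.

Lemma V_region N (x : nat -> R) B : (forall i, (i<N)%nat -> 0 < x i <= B) ->
  Vf N x <= INR N * (Rmax B 1 * ln (Rmax B 1)).
Proof.
  intros H. unfold Vf. rewrite <- sumR_const. apply sumR_le. intros i Hi. destruct (H i Hi) as [H1 H2].
  set (B' := Rmax B 1).
  assert (HB1 : 1 <= B') by apply Rmax_r. assert (HB : B <= B') by apply Rmax_l.
  assert (Hl : ln (x i) <= ln B') by (apply ln_le'; lra).
  assert (Hl0 : 0 <= ln B') by (rewrite <- ln_1; apply ln_le'; lra).
  assert (x i * ln (x i) <= x i * ln B') by (apply Rmult_le_compat_l; lra).
  assert (x i * ln B' <= B' * ln B') by (apply Rmult_le_compat_r; lra).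
  lra.
Qed.

Lemma V_coord N x c i : (i < N)%nat -> (forall j, (j<N)%nat -> 0 < x j) -> Vf N x <= c ->
  x i <= Rmax (exp 2) (c + INR N).
Proof.
  intros Hi Hx HV. apply xlnx_upper; auto.
  assert (x i * ln (x i) - x i + 1 <= sumR N (fun j => x j * ln (x j) - x j + 1)).
  { apply (sumR_single N (fun j => x j * ln (x j) - x j + 1)); auto.
    intros j Hj. pose proof (xlnx_lower (x j) (Hx j Hj)). lra. }
  rewrite sumR_plus, sumR_const in H. unfold Vf in HV. lra.
Qed.

Lemma reach_conv N G : is_network N G -> forall u v, reach G u v ->
  clos_refl_trans nat (fun u v => exists k, (k < nRx G)%nat /\ src G k = u /\ tgt G k = v) u v.
Proof.
  intros HG u v H. induction H.
  - apply rt_step. unfold edge in H. destruct (@In_nth _ _ _ (0%nat,0%nat) H) as [k [Hk Hnth]].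
    exists k. unfold nRx, src, tgt. rewrite Hnth. auto.
  - apply rt_refl.
  - eapply rt_trans; eauto.
Qed.

Lemma src_tgt_lt N G k : is_network N G -> (k < nRx G)%nat ->
  (src G k < length (complexes G))%nat /\ (tgt G k < length (complexes G))%nat.
Proof.
  intros [_ [_ [HR _]]] Hk. unfold src, tgt. destruct (HR (nth k (reactions G) (0%nat,0%nat))) as [H1 [H2 _]].
  apply nth_In. auto. auto.
Qed.

Theorem mainTheorem6 (N : nat) (G : network) (kappa : nat -> R -> R)
  (HG : is_network N G)
  (Hwr : weakly_reversible G)
  (Hlc : single_linkage_class G)
  (Hk : bounded_kinetics G kappa)
  (x0 : nat -> R) (Hx0 : forall i, (i < N)%nat -> 0 < x0 i)
  (phi : R -> nat -> R) (Hphi : is_solution N G kappa x0 phi) :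
  exists M T, forall t, T <= t -> vnorm N (phi t) <= M.
Proof.
  destruct Hk as [eta [Heta Hkb]].
  assert (Hk' : forall k t, (k < nRx G)%nat -> 0 <= t -> eta < kappa k t < /eta) by (intros; apply Hkb; auto).
  assert (Hpos := positivity N G kappa x0 phi eta Heta Hk' Hx0 Hphi).
  destruct (Nat.eq_dec N 0) as [HN0|HN0].
  { exists 0, 0. intros t _. subst. unfold vnorm. simpl. rewrite sqrt_0. lra. }
  assert (Hn : (0 < length (complexes G))%nat).
  { destruct HG as [_ [_ [_ [Hsp _]]]]. destruct (Hsp 0%nat ltac:(lia)) as [y [Hy _]].
    destruct (complexes G); simpl in *; [contradiction|lia]. }
  destruct (ginv N (nRx G) (dv G)) as [E HE].
  assert (Hcons := conservation N G kappa x0 phi E Hphi HE).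
  set (Th := theta eta (nRx G) (length (complexes G))).
  assert (HTh : 0 <= Th) by (apply theta_nonneg; auto).
  set (Kc := sumR (nRx G) (fun k => sumR N (fun i => Rabs (E k i)))).
  set (L0 := sumR N (fun j => Rabs (ln (x0 j)))).
  set (M0 := Th * Kc + L0).
  set (cc := fun j => x0 j * (exp (M0+1) + 1)).
  set (Bnd := sumR N (fun i => x0 i + M0 * sumR N cc + (M0+1) * cc i)).
  assert (Hreg : forall x : nat -> R, (forall i, (i<N)%nat -> 0 < x i) ->
    (forall j, (j < N)%nat -> x j - x0 j = sumR (nRx G) (fun k => sumR N (fun i => E k i * (x i - x0 i)) * dv G k j)) ->
    (forall k, (k < nRx G)%nat -> Rabs (ellx N G x (tgt G k) - ellx N G x (src G k)) <= Th) ->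
    forall i, (i < N)%nat -> x i <= Bnd).
  { intros x Hx Hc Hl i Hi. exact (region N G E x0 x Th HTh Hx0 Hx Hc Hl i Hi). }
  set (Vb := INR N * (Rmax Bnd 1 * ln (Rmax Bnd 1))).
  set (V := fun s => Vf N (phi s)).
  set (c := Rmax (V 0) Vb).
  set (V' := fun s => sumR N (fun i => mass_action_rhs N G kappa s (phi s) i * ln (phi s i))).
  assert (HVd : forall s, 0 <= s -> derivable_pt_lim V s (V' s)).
  { intros s Hs. apply V_deriv with x0; auto. }
  assert (Hkey : forall s, 0 <= s -> c < V s -> V' s <= 0).
  { intros s Hs HV. unfold V'.
    assert (Hps : forall i, (i<N)%nat -> 0 < phi s i) by (intros; apply Hpos; auto).
    rewrite (sumR_ext N _ (fun i => sumR (nRx G) (fun k => kappa k s * mono N (cplx G (src G k)) (phi s) * dv G k i) * ln (phi s i)))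
      by (intros; rewrite rhs_eq; auto).
    rewrite D_eq by auto.
    destruct (tier (length (complexes G)) (nRx G) (src G) (tgt G) (fun k => kappa k s) (ellx N G (phi s)) eta Heta Hn
       (fun k Hk => Hk' k s Hk Hs) (fun k Hk => src_tgt_lt N G k HG Hk)
       (fun u v Hu Hv => reach_conv N G HG u v (Hwr u v Hu Hv (Hlc u v Hu Hv)))) as [HD|Hsp]; auto.
    exfalso.
    assert (Hb : forall i, (i<N)%nat -> phi s i <= Bnd).
    { refine (Hreg (phi s) Hps _ _). intros j Hj; apply Hcons; auto.
      intros k Hk. destruct (src_tgt_lt N G k HG Hk) as [H1 H2]. apply Rabs_le. split.
      assert (ellx N G (phi s) (src G k) - ellx N G (phi s) (tgt G k) <= theta eta (nRx G) (length (complexes G))) by (apply Hsp; auto).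
      fold Th in H. lra. apply Hsp; auto. }
    assert (V s <= Vb) by (apply V_region; intros i Hi; split; auto).
    assert (Vb <= c) by apply Rmax_r. lra. }
  assert (HVc : forall s, 0 <= s -> continuity_pt V s) by (intros; eapply dlim_cont; apply HVd; auto).
  assert (HVb : forall t, 0 <= t -> V t <= c).
  { intros t1 Ht1. apply Rnot_lt_le; intro Hgt.
    destruct (first_time (fun s => V (t1 - s) - c) 0 t1 Ht1) as [ts [[Hts0 Hts1] [Hhts Hbef]]].
    { intros s Hs Hp. 
      destruct (cont_pos (fun r => V r - c) (t1 - s)) as [del [Hdel Hd]]; auto.
      { apply (continuity_pt_minus V (fun _ => c)). apply HVc; lra. apply continuity_pt_const; intros ? ?; auto. }
      exists del; split; auto. intros y Hy. apply Hd.
      replace (t1 - y - (t1 - s)) with (- (y - s)) by ring. rewrite Rabs_Ropp; auto. }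
    { replace (t1 - 0) with t1 by ring. lra. }
    { replace (t1 - t1) with 0 by ring. assert (V 0 <= c) by apply Rmax_l. lra. }
    destruct (MVT_cor2 V V' (t1 - ts) t1 ltac:(lra) (fun r Hr => HVd r ltac:(lra))) as [xi [Hmvt Hxi]].
    assert (c < V xi).
    { specialize (Hbef (t1 - xi) ltac:(lra)). simpl in Hbef. replace (t1 - (t1 - xi)) with xi in Hbef by ring. lra. }
    assert (V' xi <= 0) by (apply Hkey; auto; lra).
    simpl in Hhts. assert (V' xi * (t1 - (t1 - ts)) <= 0).
    { replace (t1 - (t1 - ts)) with ts by ring. assert (0 <= -V' xi * ts) by (apply Rmult_le_pos; lra). lra. }
    lra. }
  set (Bx := Rmax (exp 2) (c + INR N)).
  exists (sqrt (INR N * (Bx * Bx))), 0. intros t Ht.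
  unfold vnorm. rewrite fold_sum. apply sqrt_le_1_alt. rewrite <- sumR_const. apply sumR_le.
  intros i Hi. assert (H1 : 0 < phi t i) by (apply Hpos; auto).
  assert (H2 : phi t i <= Bx) by (apply (V_coord N (phi t) c i); auto; apply (HVb t); auto).
  simpl. nra.
Qed.
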